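(* Fix $p\in(0,1)$ and $B>0$, and suppose $Y_{a,b}\in[0,B]$ for all pairs. Under the Alternating Path Randomized Design, for a component $\mathcal{P}_s$ of length $k=k(s)$: if $\mathcal{P}_s$ is a path, \[\max_{Y_e\in[0,B]\ \forall e\in\mathcal{P}_s}\mathrm{Var}(\hat\Gamma_s)=\Big(\frac1p+\frac2{1-p}\Big)B^2k+\frac{2B^2(p^{k}-1)}{(1-p)^2};\] if $\mathcal{P}_s$ is a cycle, \[\max_{Y_e\in[0,B]\ \forall e\in\mathcal{P}_s}\mathrm{Var}(\hat\Gamma_s)=\Big(\frac1p+\frac2{1-p}\Big)B^2(k-1)+\frac{2B^2(p^{k-1}-1)}{(1-p)^2}+\frac{B^2\big(4+2p-p^2-p^3-p^{k-2}(2+p+p^2)\big)}{(1-p)(1+p^{k-1})}.\] Moreover, for both paths and cycles, \[\lim_{k\to\infty}\frac{1}{k}\max_{Y_e\in[0,B]\ \forall e\in\mathcal{P}_s}\mathrm{Var}(\hat\Gamma_s)=\frac{B^2(1+p)}{p(1-p)}.\]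
   Context: Setting: $2N$ agents; $\mathbb{M}^t,\mathbb{M}^c$ are one-to-one matchings (sets of unordered pairs of distinct agents, each agent in at most one pair); each pair $(a,b)$ has a fixed real potential outcome $Y_{a,b}$. The disagreement set $\triangle\mathbb{M}^{(t,c)}=(\mathbb{M}^t\cup\mathbb{M}^c)\setminus(\mathbb{M}^t\cap\mathbb{M}^c)$, viewed as a graph, has connected components, each an alternating path or cycle: a sequence $(v_{s,1},\dots,v_{s,k(s)+1})$ whose consecutive pairs $e_{s,j}=(v_{s,j},v_{s,j+1})$, $j=1,\dots,k(s)$, are its edges, alternating between $\triangle\mathbb{M}^{(t,c)}_t=\triangle\mathbb{M}^{(t,c)}\cap\mathbb{M}^t$ and $\triangle\mathbb{M}^{(t,c)}_c=\triangle\mathbb{M}^{(t,c)}\cap\mathbb{M}^c$; a cycle if $v_{s,1}=v_{s,k(s)+1}$, a path otherwise; $k(s)$ is its length. Alternating Path Randomized Design with parameter $p$: indicators $W_{s,j}\in\{0,1\}$, independent across components; within $\mathcal{P}_s$, $\mathbb{P}(W_{s,1}=1)=p/(1+p)$; for $2\le j\le k(s)$ (path) or $2\le j\le k(s)-1$ (cycle), conditionally on $W_{s,1},\dots,W_{s,j-1}$, $W_{s,j}=1$ with probability $p$ if $W_{s,j-1}=0$ and $W_{s,j}=0$ if $W_{s,j-1}=1$; for a cycle, $W_{s,k(s)}=1$ iff $W_{s,1}=W_{s,k(s)-1}=0$. $\hat\Gamma_s=\sum_{j:\,e_{s,j}\in\triangle\mathbb{M}^{(t,c)}_t}\frac{W_{s,j}Y_{e_{s,j}}}{\mathbb{P}(W_{s,j}=1)}-\sum_{j:\,e_{s,j}\in\triangle\mathbb{M}^{(t,c)}_c}\frac{W_{s,j}Y_{e_{s,j}}}{\mathbb{P}(W_{s,j}=1)}$.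 The limit statement is over components (paths, respectively cycles) whose length $k$ tends to infinity, with the maxima given by the formulas above. *)

(* Defs.v *)
From HB Require Import structures.
From mathcomp Require Import all_boot all_order all_algebra.
From mathcomp Require Import all_classical all_reals all_analysis.
Set Implicit Arguments. Unset Strict Implicit. Unset Printing Implicit Defensive.
Import Order.TTheory GRing.Theory Num.Theory.
Local Open Scope ring_scope.

(* A component P_s of length k is represented by its edges e_{s,1..k},
   indexed 0..k-1 (index j <-> edge e_{s,j+1}).  A realization of the
   design is a tuple w : k.-tuple bool, w_j = W_{s,j+1}. *)

Section APRD.
Variable R : realType.
Variable p : R.

Definition apr_init (b : bool) : R := if b then p / (1 + p) else 1 / (1 + p).

Definition apr_trans (prev cur : bool) : R :=
  if prev then (if cur then 0 else 1) else (if cur then p else 1 - p).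

Definition apr_step k (w : k.-tuple bool) (j : nat) : R :=
  if j == 0%N then apr_init (nth false w 0)
  else apr_trans (nth false w j.-1) (nth false w j).

Definition path_prob k (w : k.-tuple bool) : R :=
  \prod_(j < k) apr_step w j.

Definition cycle_prob k (w : k.-tuple bool) : R :=
  (\prod_(j < k.-1) apr_step w j) *
  (if nth false w k.-1 == (~~ nth false w 0 && ~~ nth false w k.-2) then 1 else 0).

Definition marg k (P : k.-tuple bool -> R) (j : nat) : R :=
  \sum_(w : k.-tuple bool) (if nth false w j then P w else 0).

(* sign of edge e_{s,j+1}: +1 if it lies in the treatment matching, -1 if in
   the control matching; the edges alternate, t1 says whether e_{s,1} is in M^t *)
Definition edge_sign (t1 : bool) (j : nat) : R :=
  if t1 then (-1) ^+ j else (-1) ^+ j.+1.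

Definition Gamma_hat k (P : k.-tuple bool -> R) (t1 : bool) (Y : nat -> R)
  (w : k.-tuple bool) : R :=
  \sum_(j < k) edge_sign t1 j *
     (if nth false w j then Y j / marg P j else 0).

Definition expect k (P : k.-tuple bool -> R) (X : k.-tuple bool -> R) : R :=
  \sum_(w : k.-tuple bool) P w * X w.

Definition variance k (P : k.-tuple bool -> R) (X : k.-tuple bool -> R) : R :=
  expect P (fun w => (X w - expect P X) ^+ 2).

Definition Var_Gamma k (P : k.-tuple bool -> R) (t1 : bool) (Y : nat -> R) : R :=
  variance P (Gamma_hat P t1 Y).

Definition is_max_var k (P : k.-tuple bool -> R) (t1 : bool) (B M : R) : Prop :=
  (forall Y : nat -> R, (forall j, (j < k)%N -> 0 <= Y j <= B) ->
       Var_Gamma P t1 Y <= M) /\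
  (exists Y : nat -> R, (forall j, (j < k)%N -> 0 <= Y j <= B) /\
       Var_Gamma P t1 Y = M).

End APRD.

(* Main.v *)
Require Import Defs.
From HB Require Import structures.
From mathcomp Require Import all_boot all_order all_algebra.
From mathcomp Require Import all_classical all_reals all_analysis.
From mathcomp Require Import zify.
From mathcomp.algebra_tactics Require Import ring lra.
Import Order.TTheory GRing.Theory Num.Theory.
Import numFieldNormedType.Exports.
Local Open Scope classical_set_scope.
Local Open Scope ring_scope.
Set Implicit Arguments. Unset Strict Implicit. Unset Printing Implicit Defensive.


Section Gen.
Variable R : realType.

Definition Ejoint k (P : k.-tuple bool -> R) i j : R :=
  \sum_(w : k.-tuple bool) (if nth false w i && nth false w j then P w else 0).

Definition Kc k (P : k.-tuple bool -> R) i j : R :=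
  (-1) ^+ (i + j) * (Ejoint P i j / (Defs.marg P i * Defs.marg P j) - 1).

Lemma variance_alt k (P : k.-tuple bool -> R) X :
  \sum_w P w = 1 -> Defs.variance P X = Defs.expect P (fun w => X w ^+ 2) - (Defs.expect P X) ^+ 2.
Proof.
move=> HP; rewrite /Defs.variance /Defs.expect.
set m := \sum_w P w * X w.
have -> : \sum_w P w * (X w - m) ^+ 2 =
   \sum_w (P w * X w ^+ 2 - (2 * m) * (P w * X w) + m ^+ 2 * P w).
  by apply: eq_bigr => w _; ring.
rewrite big_split sumrB /= -!mulr_sumr HP -/m; ring.
Qed.

Lemma sign_edge t1 i j : edge_sign R t1 i * edge_sign R t1 j = (-1) ^+ (i + j).
Proof. case: t1; rewrite /edge_sign -exprD // !addSn addnS !exprS; ring. Qed.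

Lemma var_quad k (P : k.-tuple bool -> R) t1 Y :
  \sum_w P w = 1 -> (forall j, (j < k)%N -> Defs.marg P j != 0) ->
  Var_Gamma P t1 Y = \sum_(i < k) \sum_(j < k) Y i * Y j * Kc P i j.
Proof.
move=> HP Hm; rewrite /Var_Gamma variance_alt //.
pose a j := edge_sign R t1 j * Y j / Defs.marg P j.
have HG : forall w, Gamma_hat P t1 Y w = \sum_(j < k) a j * (nth false w j)%:R.
  move=> w; apply: eq_bigr => j _; rewrite /a; case: (nth false w j) => /=.
    by rewrite mulr1 mulrA.
  by rewrite mulr0 mulr0.
have E1 : Defs.expect P (Gamma_hat P t1 Y) = \sum_(j < k) a j * Defs.marg P j.
  rewrite /Defs.expect; under eq_bigr do rewrite HG mulr_sumr.
  rewrite exchange_big /=; apply: eq_bigr => j _.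
  rewrite /Defs.marg mulr_sumr; apply: eq_bigr => w _.
  by case: (nth false w j); rewrite /= ?mulr1 ?mulr0 // mulrC.
have E2 : Defs.expect P (fun w => Gamma_hat P t1 Y w ^+ 2) =
   \sum_(i < k) \sum_(j < k) a i * a j * Ejoint P i j.
  rewrite /Defs.expect.
  under eq_bigr do rewrite HG expr2 mulr_suml mulr_sumr; under eq_bigr do under eq_bigr do rewrite mulr_sumr mulr_sumr.
  rewrite exchange_big /=; apply: eq_bigr => i _.
  rewrite exchange_big /=; apply: eq_bigr => j _.
  rewrite /Ejoint mulr_sumr; apply: eq_bigr => w _.
  by case: (nth false w i); case: (nth false w j); rewrite /= ?mulr1 ?mulr0 ?mul0r ?mulr0 //; ring.
rewrite E1 E2 expr2 mulr_suml -sumrB; apply: eq_bigr => i _.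
rewrite mulr_sumr -sumrB; apply: eq_bigr => j _.
rewrite /Kc /a -(sign_edge t1 i j).
have := Hm _ (ltn_ord i); have := Hm _ (ltn_ord j).
move: (Defs.marg P i) (Defs.marg P j) => mi mj Hj Hi.
field. by rewrite Hi Hj.
Qed.

Lemma quad_le k (K : nat -> nat -> R) (Y : nat -> R) (B : R) :
  (forall i j, (i < k)%N -> (j < k)%N -> 0 <= K i j) ->
  (forall j, (j < k)%N -> 0 <= Y j <= B) ->
  \sum_(i < k) \sum_(j < k) Y i * Y j * K i j <= \sum_(i < k) \sum_(j < k) B * B * K i j.
Proof.
move=> HK HY; apply: ler_sum => i _; apply: ler_sum => j _.
apply: ler_wpM2r; first exact: HK.
have /andP[a b] := HY _ (ltn_ord i); have /andP[c d] := HY _ (ltn_ord j).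
by apply: ler_pM.
Qed.

Lemma max_var_of k (P : k.-tuple bool -> R) t1 B M :
  0 <= B ->
  \sum_w P w = 1 -> (forall j, (j < k)%N -> Defs.marg P j != 0) ->
  (forall i j, (i < k)%N -> (j < k)%N -> 0 <= Kc P i j) ->
  B ^+ 2 * \sum_(i < k) \sum_(j < k) Kc P i j = M ->
  is_max_var P t1 B M.
Proof.
move=> HB HP Hm HK HM.
have HMe : M = Var_Gamma P t1 (fun _ => B).
  rewrite var_quad // -HM mulr_sumr; apply: eq_bigr => i _.
  rewrite mulr_sumr; apply: eq_bigr => j _; by rewrite expr2.
split.
  move=> Y HY; rewrite HMe !var_quad //; exact: quad_le.
exists (fun _ => B); split => //; by move=> j _; rewrite HB lexx.
Qed.

Lemma max_var_uniq k (P : k.-tuple bool -> R) t1 B M1 M2 :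
  is_max_var P t1 B M1 -> is_max_var P t1 B M2 -> M1 = M2.
Proof.
move=> [H1 [Y1 [HY1 E1]]] [H2 [Y2 [HY2 E2]]].
apply/eqP; rewrite eq_le; apply/andP; split.
  by rewrite -E1; apply: H2.
by rewrite -E2; apply: H1.
Qed.

Lemma Kc_sym k (P : k.-tuple bool -> R) i j : Kc P i j = Kc P j i.
Proof.
rewrite /Kc /Ejoint addnC [Defs.marg P i * _]mulrC; congr (_ * (_ / _ - _)).
by apply: eq_bigr => w _; rewrite andbC.
Qed.

Lemma Ejoint_diag k (P : k.-tuple bool -> R) i : Ejoint P i i = Defs.marg P i.
Proof. by apply: eq_bigr => w _; rewrite andbb. Qed.

Lemma block_sum n (F : nat -> nat -> R) :
  \sum_(i < n.+1) \sum_(j < n.+1) F i j =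
  \sum_(i < n) \sum_(j < n) F i j + \sum_(j < n) F n j + \sum_(i < n) F i n + F n n.
Proof.
rewrite big_ord_recr /= big_ord_recr /=.
under eq_bigr do rewrite big_ord_recr /=.
rewrite big_split /=; ring.
Qed.

Lemma marg_alt k (P : k.-tuple bool -> R) j :
  Defs.marg P j = \sum_w P w * (nth false w j)%:R.
Proof. by apply: eq_bigr => w _; case: (nth false w j); rewrite ?mulr1 ?mulr0. Qed.

Lemma Ejoint_alt k (P : k.-tuple bool -> R) i j :
  Ejoint P i j = \sum_w P w * (nth false w i && nth false w j)%:R.
Proof. by apply: eq_bigr => w _; case: (_ && _); rewrite ?mulr1 ?mulr0. Qed.

End Gen.



Section Chain.
Variable R : realType.

Lemma sum_rcons n (F : n.+1.-tuple bool -> R) :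
  \sum_(w : n.+1.-tuple bool) F w = \sum_(u : n.-tuple bool) \sum_(b : bool) F (rcons_tuple u b).
Proof.
rewrite pair_big /=.
rewrite (reindex (fun x : n.-tuple bool * bool => rcons_tuple x.1 x.2)) //=.
exists (fun w : n.+1.-tuple bool => (belast_tuple (nth false w 0) (behead_tuple w), last (nth false w 0) (behead w))).
  move=> [u b] _ /=.
  have [E1 E2] : belast (nth false (rcons u b) 0) (behead (rcons u b)) = u /\
     last (nth false (rcons u b) 0) (behead (rcons u b)) = b.
    by case: u => [[|x s] Hs] //=; rewrite belast_rcons last_rcons.
  congr (_, _) => //; apply: val_inj => /=; exact: E1.
move=> w _; apply: val_inj => /=.
by case: w => [[|x s] Hs] //=; rewrite -lastI.
Qed.

Lemma sum_tuple0 (F : 0.-tuple bool -> R) : \sum_(w : 0.-tuple bool) F w = F [tuple].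
Proof.
rewrite (big_pred1 [tuple]) // => u /=; symmetry; apply/eqP; exact: tuple0.
Qed.


Variable p : R.
Hypothesis p0 : 0 < p.
Hypothesis p1 : p < 1.

Local Notation T := (apr_trans p).
Local Notation init := (apr_init p).

Lemma nth_rc n (u : n.-tuple bool) b j : (j < n)%N -> nth false (rcons_tuple u b) j = nth false u j.
Proof. by move=> H; rewrite /= nth_rcons size_tuple H. Qed.

Lemma nth_rcn n (u : n.-tuple bool) b : nth false (rcons_tuple u b) n = b.
Proof. by rewrite /= nth_rcons size_tuple ltnn eqxx. Qed.

Lemma path_prob_rcons n (u : n.+1.-tuple bool) b :
  path_prob p (rcons_tuple u b) = path_prob p u * T (nth false u n) b.
Proof.
rewrite /path_prob big_ord_recr /=; congr (_ * _).
  apply: eq_bigr => j _; rewrite /apr_step.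
  have Hj : (j < n.+1)%N by [].
  have Hj1 : (j.-1 < n.+1)%N by apply: leq_ltn_trans (leq_pred j) Hj.
  by rewrite !nth_rc.
by rewrite /apr_step /= nth_rc // nth_rcn.
Qed.

Lemma path_prob_1 (u : 0.-tuple bool) b : path_prob p (rcons_tuple u b) = init b.
Proof. by rewrite /path_prob big_ord_recr big_ord0 /apr_step /= nth_rcn mul1r. Qed.

Fixpoint Af (g : nat -> bool -> R) (m : nat) (c : bool) : R :=
  match m with
  | 0 => init c
  | m'.+1 => \sum_(b : bool) Af g m' b * g m' b * T b c
  end.

Lemma A_cond n (g : nat -> bool -> R) c :
  \sum_(w : n.+1.-tuple bool) path_prob p w * (\prod_(j < n) g j (nth false w j)) *
      (nth false w n == c)%:R = Af g n c.
Proof.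
elim: n c => [|n IH] c.
  rewrite sum_rcons sum_tuple0 big_bool (path_prob_1 _ true) (path_prob_1 _ false) !big_ord0 /=.
  by case: c; rewrite /= ?mulr1 ?mulr0 ?addr0 ?add0r.
rewrite sum_rcons.
have E : forall (u : n.+1.-tuple bool) b, path_prob p (rcons_tuple u b) * (\prod_(j < n.+1) g j (nth false (rcons_tuple u b) j)) * (nth false (rcons_tuple u b) n.+1 == c)%:R = path_prob p u * T (nth false u n) b * (\prod_(j < n.+1) g j (nth false u j)) * (b == c)%:R.
  move=> u b; rewrite path_prob_rcons nth_rcn; congr (_ * _ * _); apply: eq_bigr => j _; by rewrite nth_rc.
under eq_bigr do under eq_bigr do rewrite E.
have -> : \sum_(u : n.+1.-tuple bool) \sum_(b : bool) (path_prob p u * T (nth false u n) b * (\prod_(i < n.+1) g i (nth false u i)) * (b == c)%:R)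
   = \sum_(u : n.+1.-tuple bool) path_prob p u * (\prod_(i < n) g i (nth false u i)) * (g n (nth false u n) * T (nth false u n) c).
  apply: eq_bigr => u _; rewrite big_bool big_ord_recr /=.
  by clear E; case: c; rewrite /= ?mulr1 ?mulr0 ?addr0 ?add0r; ring.
rewrite [RHS]/=; under [RHS]eq_bigr => x _ do rewrite -IH mulr_suml mulr_suml.
rewrite exchange_big /=; apply: eq_bigr => u _.
rewrite big_bool /=; case: (nth false u n); rewrite /= ?mulr1 ?mulr0 ?mul0r ?addr0 ?add0r; ring.
Qed.


Lemma hp1 : 1 + p != 0.
Proof. apply: lt0r_neq0; have h := p0; lra. Qed.

Lemma T_sum b : \sum_(c : bool) T b c = 1.
Proof. by rewrite big_bool; case: b; rewrite /apr_trans /=; ring. Qed.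

Lemma A_total n (g : nat -> bool -> R) :
  \sum_(w : n.-tuple bool) path_prob p w * \prod_(j < n) g j (nth false w j) = \sum_(c : bool) Af g n c.
Proof.
case: n => [|m].
  rewrite sum_tuple0 /path_prob !big_ord0 big_bool /= /apr_init.
  have h := hp1. field => //.
have E : forall w : m.+1.-tuple bool, path_prob p w * \prod_(j < m.+1) g j (nth false w j)
   = \sum_(x : bool) path_prob p w * (\prod_(j < m) g j (nth false w j)) * (nth false w m == x)%:R * g m x.
  move=> w; rewrite big_bool big_ord_recr /=; case: (nth false w m); rewrite /= ?mulr1 ?mulr0 ?addr0 ?add0r //; ring.
under eq_bigr do rewrite E.
rewrite exchange_big /=.
under eq_bigr do rewrite -mulr_suml A_cond.
rewrite /= exchange_big /=; apply: eq_bigr => b _.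
by rewrite -mulr_sumr T_sum mulr1.
Qed.

Definition pi := p / (1 + p).
Definition Tm (d : nat) (b c : bool) : R :=
  if c then pi + (b%:R - pi) * (- p) ^+ d else (1 - pi) - (b%:R - pi) * (- p) ^+ d.

Lemma init_pi c : init c = if c then pi else 1 - pi.
Proof. have := hp1; rewrite /apr_init /pi; case: c => // h; field => //. Qed.

Lemma Tm0 b c : Tm 0 b c = (b == c)%:R.
Proof. by rewrite /Tm; case: b; case: c => /=; ring. Qed.

Lemma TmS_r d b c : Tm d.+1 b c = \sum_(x : bool) Tm d b x * T x c.
Proof.
have := hp1; rewrite big_bool /Tm /pi /apr_trans exprS.
by case: b; case: c => /= h; field.
Qed.

Lemma TmS_l d b c : Tm d.+1 b c = \sum_(x : bool) T b x * Tm d x c.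
Proof.
have := hp1; rewrite big_bool /Tm /pi /apr_trans exprS.
by case: b; case: c => /= h; field.
Qed.

Lemma Tm_sum d b : \sum_(c : bool) Tm d b c = 1.
Proof. by rewrite big_bool /Tm /=; ring. Qed.

Lemma Tm_stat d c : \sum_(b : bool) init b * Tm d b c = init c.
Proof.
have := hp1; rewrite big_bool !init_pi /Tm /pi.
by case: c => /= h; field.
Qed.

Lemma A_seg (g : nat -> bool -> R) m d c :
  (forall t, (t < d)%N -> forall b, g (m + t)%N b = 1) ->
  Af g (m + d) c = \sum_(b : bool) Af g m b * Tm d b c.
Proof.
elim: d c => [|d IH] c H.
  rewrite addn0 big_bool !Tm0; case: c => /=; ring.
rewrite addnS /=.
have Hd : forall b, g (m + d)%N b = 1 by move=> b; apply: H.
have IH' : forall c', Af g (m + d) c' = \sum_(b : bool) Af g m b * Tm d b c'.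
  by move=> c'; apply: IH => t Ht; apply: H; lia.
under eq_bigr => b _ do rewrite Hd IH'.
under [RHS]eq_bigr => b _ do rewrite TmS_r.
rewrite !big_bool /=; ring.
Qed.

Lemma A_stat (g : nat -> bool -> R) m c :
  (forall t, (t < m)%N -> forall b, g t b = 1) -> Af g m c = init c.
Proof.
move=> H; rewrite -(add0n m) A_seg //; first exact: Tm_stat.
Qed.

Lemma A_mass (g : nat -> bool -> R) m d :
  (forall t, (t < d)%N -> forall b, g (m + t)%N b = 1) ->
  \sum_(c : bool) Af g (m + d) c = \sum_(c : bool) Af g m c.
Proof.
move=> H; under eq_bigr do rewrite A_seg //.
rewrite exchange_big /=; apply: eq_bigr => b _.
by rewrite -mulr_sumr Tm_sum mulr1.
Qed.

Lemma A_jump (g : nat -> bool -> R) m d v c :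
  (forall b, g m b = (b == v)%:R) ->
  (forall t, (t < d)%N -> forall b, g (m.+1 + t)%N b = 1) ->
  Af g (m.+1 + d) c = Af g m v * Tm d.+1 v c.
Proof.
move=> Hv H; rewrite A_seg // TmS_l mulr_sumr; apply: eq_bigr => b _ /=.
rewrite !big_bool /= !Hv; clear Hv H; case: v => /=; ring.
Qed.

Lemma A_last (g : nat -> bool -> R) m v :
  (forall b, g m b = (b == v)%:R) ->
  \sum_(c : bool) Af g m.+1 c = Af g m v.
Proof.
move=> Hv /=; rewrite exchange_big /=.
under eq_bigr do rewrite -mulr_sumr T_sum mulr1 Hv.
rewrite big_bool; clear Hv; case: v => /=; ring.
Qed.


Definition gw (l : seq (nat * bool)) (t : nat) (c : bool) : R :=
  \prod_(x <- l) (if x.1 == t then (c == x.2)%:R else 1).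

Lemma prod_gw n (l : seq (nat * bool)) (w : n.-tuple bool) :
  all (fun x => (x.1 < n)%N) l ->
  \prod_(j < n) gw l j (nth false w j) = \prod_(x <- l) (nth false w x.1 == x.2)%:R.
Proof.
move=> Hl; rewrite /gw exchange_big /=.
rewrite big_seq_cond [RHS]big_seq_cond; apply: eq_bigr => x /andP[Hx _].
have Hx1 : (x.1 < n)%N by move/allP: Hl => /(_ x Hx).
rewrite (bigD1 (Ordinal Hx1)) //= eqxx big1 ?mulr1 // => j Hj.
case: eqP => // E; move: Hj; by rewrite -val_eqE /= E eqxx.
Qed.

Ltac gwsimp := rewrite /gw ?big_cons ?big_nil /=;
  repeat match goal with
  | |- context [ (?a == ?b) ] =>
      let _ := constr:(a : nat) in
      first [ rewrite (_ : (a == b) = true); last by lia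
            | rewrite (_ : (a == b) = false); last by lia ]
  end; rewrite /= ?mulr1 ?mul1r.

Lemma Af_ext (g1 g2 : nat -> bool -> R) m c : (forall t b, g1 t b = g2 t b) -> Af g1 m c = Af g2 m c.
Proof.
move=> H; elim: m c => [|m IH] c //=; apply: eq_bigr => b _; by rewrite IH H.
Qed.

Lemma pi_gt0 : 0 < pi.
Proof. rewrite /pi; apply: divr_gt0; have h := p0; lra. Qed.

Lemma path_total n : \sum_(w : n.-tuple bool) path_prob p w = 1.
Proof.
transitivity (\sum_(w : n.-tuple bool) path_prob p w * \prod_(j < n) (fun (_ : nat) (_ : bool) => 1 : R) j (nth false w j)).
  by apply: eq_bigr => w _; rewrite big1 ?mulr1.
rewrite (A_total _ (fun _ _ => 1)).
under eq_bigr do rewrite (A_stat (g := fun _ _ => 1)) //.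
by rewrite big_bool !init_pi /=; ring.
Qed.

Lemma path_marg n j : (j < n)%N -> Defs.marg (path_prob p (k:=n)) j = pi.
Proof.
move=> Hj; rewrite /Defs.marg.
transitivity (\sum_(w : n.-tuple bool) path_prob p w * \prod_(t < n) gw [:: (j, true)] t (nth false w t)).
  apply: eq_bigr => w _; rewrite prod_gw /= ?Hj // big_seq1.
  by case: (nth false w j); rewrite ?mulr1 ?mulr0.
rewrite (A_total _ (gw [:: (j, true)])) (_ : n = (j.+1 + (n - j.+1))%N); last by lia.
rewrite A_mass; last by move=> t Ht b; gwsimp.
rewrite (A_last (v := true)); last by move=> b; gwsimp.
by rewrite A_stat ?init_pi // => t Ht b; gwsimp.
Qed.

Lemma path_E n i j : (i < j)%N -> (j < n)%N ->
  Ejoint (path_prob p (k:=n)) i j = pi * Tm (j - i) true true.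
Proof.
move=> Hij Hj; rewrite /Ejoint.
transitivity (\sum_(w : n.-tuple bool) path_prob p w * \prod_(t < n) gw [:: (i, true); (j, true)] t (nth false w t)).
  apply: eq_bigr => w _; rewrite prod_gw /=; last by rewrite (ltn_trans Hij Hj) Hj.
  rewrite !big_cons big_nil.
  by case: (nth false w j); case: (nth false w i); rewrite /= ?mulr1 ?mulr0 ?mul0r.
rewrite (A_total _ (gw [:: (i, true); (j, true)])) (_ : n = (j.+1 + (n - j.+1))%N); last by lia.
rewrite A_mass; last by move=> t Ht b; gwsimp.
rewrite (A_last (v := true)); last by move=> b; gwsimp.
rewrite (_ : j = (i.+1 + (j - i.+1))%N); last by lia.
rewrite (A_jump (v := true)); first last.
- by move=> t Ht b; gwsimp.
- by move=> b; gwsimp.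
rewrite A_stat ?init_pi; last by move=> t Ht b; gwsimp.
congr (_ * Tm _ _ _); lia.
Qed.


Lemma path_K n i j : (i < n)%N -> (j < n)%N ->
  Kc (path_prob p (k:=n)) i j = p ^+ (i - j + (j - i)) / p.
Proof.
wlog Hle : i j / (i <= j)%N.
  move=> H Hi Hj; case: (leqP i j) => h; first exact: H.
  rewrite Kc_sym H ?(ltnW h) //; congr (p ^+ _ / p); lia.
move=> Hi Hj.
have hp := hp1; have hpi := pi_gt0.
have [d Ed] : exists d, j = (i + d)%N by exists (j - i)%N; lia.
subst j.
rewrite (_ : (i - (i + d) + (i + d - i))%N = d); last by lia.
clear Hle; case: d Hj => [|d] Hj.
  rewrite addn0 /Kc Ejoint_diag path_marg // -signr_odd addnn odd_double /= expr0.
  rewrite /pi; have h := p0; field; apply/andP; split => //; apply: lt0r_neq0; lra.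
rewrite /Kc path_E ?path_marg //; try lia.
rewrite -signr_odd (_ : odd (i + (i + d.+1)) = odd d.+1); last by rewrite addnA addnn oddD odd_double.
rewrite (_ : (i + d.+1 - i)%N = d.+1); last by lia.
rewrite /Tm (exprNn p) -(signr_odd _ d.+1) /pi.
have h := p0.
case: (odd d.+1) => /=; field; apply/andP; split => //; apply: lt0r_neq0; lra.
Qed.


Lemma hq1 : 1 - p != 0.
Proof. apply: lt0r_neq0; have h := p1; lra. Qed.

Lemma geo1 n : \sum_(j < n) p ^+ j = (1 - p ^+ n) / (1 - p).
Proof.
have h := hq1.
elim: n => [|n IH]; first by rewrite big_ord0 expr0; field => //.
rewrite big_ord_recr /= IH exprS; field => //.
Qed.

Lemma geo2 n : \sum_(j < n) p ^+ (n - j) = p * (1 - p ^+ n) / (1 - p).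
Proof.
have h := hq1.
elim: n => [|n IH]; first by rewrite big_ord0 expr0; field => //.
rewrite big_ord_recl /= subn0.
under eq_bigr do rewrite /bump /= add1n subSS.
rewrite IH !exprS; field => //.
Qed.

Lemma Ssum n : \sum_(i < n) \sum_(j < n) p ^+ (i - j + (j - i)) =
  n%:R * (1 + p) / (1 - p) + 2 * p * (p ^+ n - 1) / (1 - p) ^+ 2.
Proof.
have h := hq1.
elim: n => [|n IH]; first by rewrite big_ord0; field => //.
rewrite (block_sum _ (fun i j => p ^+ (i - j + (j - i)))) /= IH.
have E1 : \sum_(j < n) p ^+ (n - j + (j - n)) = \sum_(j < n) p ^+ (n - j).
  by apply: eq_bigr => j _; rewrite (_ : (j - n)%N = 0%N) ?addn0 //; have := ltn_ord j; lia.
have E2 : \sum_(i < n) p ^+ (i - n + (n - i)) = \sum_(j < n) p ^+ (n - j).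
  by apply: eq_bigr => j _; rewrite (_ : (j - n)%N = 0%N) ?add0n //; have := ltn_ord j; lia.
rewrite E1 E2 geo2 subnn addn0 expr0 (exprS p n) -addn1 natrD; field => //.
Qed.


Lemma p_neq0 : p != 0.
Proof. exact: lt0r_neq0 p0. Qed.

Lemma path_main k t1 B : (0 < k)%N -> 0 < B ->
  is_max_var (path_prob p (k:=k)) t1 B
   ((1 / p + 2 / (1 - p)) * B ^+ 2 * k%:R + 2 * B ^+ 2 * (p ^+ k - 1) / (1 - p) ^+ 2).
Proof.
move=> Hk HB; apply: max_var_of.
- exact: ltW.
- exact: path_total.
- move=> j Hj; rewrite path_marg //; exact: lt0r_neq0 pi_gt0.
- move=> i j Hi Hj; rewrite path_K //; apply: divr_ge0; [exact: exprn_ge0 (ltW p0) | exact: ltW p0].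
have -> : \sum_(i < k) \sum_(j < k) Kc (path_prob p (k:=k)) i j =
   \sum_(i < k) \sum_(j < k) p ^+ (i - j + (j - i)) / p.
  by apply: eq_bigr => i _; apply: eq_bigr => j _; rewrite path_K.
under eq_bigr do rewrite -mulr_suml.
rewrite -mulr_suml Ssum.
have h1 := hq1; have h2 := p_neq0.
by field; rewrite h1 h2.
Qed.


Lemma prod_step_rcons n (u : n.-tuple bool) b :
  \prod_(j < n) apr_step p (rcons_tuple u b) j = \prod_(j < n) apr_step p u j.
Proof.
apply: eq_bigr => j _; rewrite /apr_step.
have Hj : (j < n)%N by [].
have Hj1 : (j.-1 < n)%N by apply: leq_ltn_trans (leq_pred j) Hj.
have H0 : (0 < n)%N by apply: leq_ltn_trans (leq0n j) Hj.
by case: (_ == _); rewrite !nth_rc.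
Qed.

Definition cv n (u : n.+1.-tuple bool) : bool := ~~ nth false u 0 && ~~ nth false u n.

Lemma cycle_red n (F : n.+2.-tuple bool -> R) :
  \sum_(w : n.+2.-tuple bool) cycle_prob p w * F w =
  \sum_(u : n.+1.-tuple bool) path_prob p u * F (rcons_tuple u (cv u)).
Proof.
rewrite sum_rcons; apply: eq_bigr => u _.
have E : forall b, cycle_prob p (rcons_tuple u b) = path_prob p u * (b == cv u)%:R.
  move=> b; rewrite /cycle_prob /= prod_step_rcons; congr (_ * _).
  rewrite (nth_rc u b (ltn0Sn n)) (nth_rc u b (ltnSn n)) (nth_rcn u b) /cv.
  by case: (b == _).
under eq_bigr do rewrite E.
rewrite big_bool /cv; case: (~~ _ && _); rewrite /= ?mulr1 ?mulr0 ?mul0r ?add0r ?addr0 //.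
Qed.

Lemma cyc_total n : \sum_(w : n.+2.-tuple bool) cycle_prob p w = 1.
Proof.
transitivity (\sum_(w : n.+2.-tuple bool) cycle_prob p w * (fun _ => 1) w).
  by apply: eq_bigr => w _; rewrite mulr1.
rewrite (cycle_red (fun _ => 1)); under eq_bigr do rewrite mulr1; exact: path_total.
Qed.

Lemma cyc_marg n j : (j < n.+1)%N ->
  Defs.marg (cycle_prob p (k:=n.+2)) j = Defs.marg (path_prob p (k:=n.+1)) j.
Proof.
move=> Hj; rewrite !marg_alt (cycle_red (fun w => (nth false w j)%:R)).
by apply: eq_bigr => u _; rewrite nth_rc.
Qed.

Lemma cyc_E n i j : (i < n.+1)%N -> (j < n.+1)%N ->
  Ejoint (cycle_prob p (k:=n.+2)) i j = Ejoint (path_prob p (k:=n.+1)) i j.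
Proof.
move=> Hi Hj; rewrite !Ejoint_alt (cycle_red (fun w => (nth false w i && nth false w j)%:R)).
by apply: eq_bigr => u _; rewrite !nth_rc.
Qed.

Lemma cyc_K n i j : (i < n.+1)%N -> (j < n.+1)%N ->
  Kc (cycle_prob p (k:=n.+2)) i j = p ^+ (i - j + (j - i)) / p.
Proof.
move=> Hi Hj; rewrite -(path_K Hi Hj) /Kc cyc_E // !cyc_marg //.
Qed.

Lemma cyc_marg_last n : (0 < n)%N ->
  Defs.marg (cycle_prob p (k:=n.+2)) n.+1 = init false * Tm n false false.
Proof.
move=> Hn; rewrite marg_alt (cycle_red (fun w => (nth false w n.+1)%:R)).
transitivity (\sum_(w : n.+1.-tuple bool) path_prob p w * \prod_(t < n.+1) gw [:: (0%N, false); (n, false)] t (nth false w t)).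
  apply: eq_bigr => w _; rewrite nth_rcn prod_gw /=; last by rewrite ltnS leqnn.
  rewrite !big_cons big_nil /cv.
  by case: (nth false w n); case: (nth false w 0); rewrite /= ?mulr1 ?mulr0 ?mul0r.
rewrite (A_total _ (gw [:: (0%N, false); (n, false)])).
rewrite (A_last (v := false)); last by move=> b; gwsimp.
have En : n = (0.+1 + n.-1)%N by lia.
rewrite [X in Af _ X _]En (A_jump (v := false)); first last.
- by move=> t Ht b; gwsimp.
- by move=> b; gwsimp.
by congr (_ * Tm _ _ _); lia.
Qed.


Lemma cyc_E_last n j : (0 < n)%N -> (j < n.+1)%N ->
  Ejoint (cycle_prob p (k:=n.+2)) j n.+1 =
  if (j == 0%N) || (j == n) then 0 else init false * Tm j false true * Tm (n - j) true false.
Proof.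
move=> Hn Hj; rewrite Ejoint_alt (cycle_red (fun w => (nth false w j && nth false w n.+1)%:R)).
under eq_bigr do rewrite nth_rc // nth_rcn.
case: ifP => [/orP[/eqP->|/eqP->]|Hjj].
- by apply: big1 => u _; rewrite /cv; case: (nth false u 0); rewrite /= ?mulr0.
- by apply: big1 => u _; rewrite /cv; case: (nth false u n); rewrite /= ?andbF ?mulr0.
move/negbT: Hjj; rewrite negb_or => /andP[/eqP Hj0 /eqP Hjn].
transitivity (\sum_(w : n.+1.-tuple bool) path_prob p w * \prod_(t < n.+1) gw [:: (0%N, false); (j, true); (n, false)] t (nth false w t)).
  apply: eq_bigr => w _; rewrite prod_gw /=; last by rewrite Hj ltnS leqnn.
  rewrite !big_cons big_nil /cv.
  by case: (nth false w n); case: (nth false w 0); case: (nth false w j); rewrite /= ?mulr1 ?mulr0 ?mul0r.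
rewrite (A_total _ (gw [:: (0%N, false); (j, true); (n, false)])).
rewrite (A_last (v := false)); last by move=> b; gwsimp.
have En : n = (j.+1 + (n - j).-1)%N by lia.
rewrite [X in Af _ X _]En (A_jump (v := true)); first last.
- by move=> t Ht b; gwsimp.
- by move=> b; gwsimp.
have Ej : j = (0.+1 + j.-1)%N by lia.
rewrite [X in Af _ X _]Ej (A_jump (v := false)); first last.
- by move=> t Ht b; gwsimp.
- by move=> b; gwsimp.
have E1 : (j.-1.+1 = j)%N by lia.
have E2 : ((n - j).-1.+1 = n - j)%N by lia.
by rewrite /= E1 E2.
Qed.


Definition Kjn n j : R := (p ^+ j + p ^+ (n - j) - (-1) ^+ j * p ^+ n * (1 - p)) / (1 + p ^+ n.+1).

Lemma cyc_Klast n j : (0 < n)%N -> ~~ odd n -> (j < n.+1)%N ->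
  Kc (cycle_prob p (k:=n.+2)) j n.+1 = Kjn n j.
Proof.
move=> Hn Hodd Hj.
rewrite /Kc cyc_E_last // cyc_marg // path_marg // cyc_marg_last //.
have [d Ed] : exists d, n = (j + d)%N by exists (n - j)%N; lia.
subst n.
have Hd : odd d = odd j by move: Hodd; rewrite oddD; case: (odd j); case: (odd d).
have Hs : odd (j + (j + d).+1) = ~~ odd j by rewrite addnS oddS !oddD Hd; case: (odd j).
rewrite /Kjn addKn /Tm init_pi /= !(exprNn p) exprS !exprD.
rewrite exprS exprD -(signr_odd _ d) Hd -(signr_odd _ j).
have hp := hp1; have hq := hq1; have hp0 := p_neq0.
have hpos : forall x, 0 < x -> 1 + p * x != 0.
  move=> x hx; apply: lt0r_neq0; have := mulr_gt0 p0 hx; have h := p0; lra.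
have h1 : 1 + p - p != 0 by rewrite addrK oner_neq0.
case: ifP => Hc.
  case/orP: Hc => /eqP Hc.
    subst j; rewrite /= expr0 !mul1r mul0r; rewrite /pi.
    have := hpos _ (exprn_gt0 d p0) => hd.
    by field.
  have d0 : d = 0%N by lia.
  subst d; rewrite expr0 mul0r -Hd /= expr0 !mulr1.
  have := hpos _ (exprn_gt0 j p0) => hd.
  by field.
have ha : 0 < p ^+ j by apply: exprn_gt0.
have hb : 0 < p ^+ d by apply: exprn_gt0.
have := hpos _ (mulr_gt0 ha hb) => hab.
move: (p ^+ j) (p ^+ d) ha hb hab => a b ha hb hab.
case: (odd j); rewrite /= ?expr1 ?expr0 /pi.
  by field; rewrite hab hp h1 hp0.
by field; rewrite hab hp h1 hp0.
Qed.


Lemma pin_val n : ~~ odd n -> init false * Tm n false false = (1 + p ^+ n.+1) / (1 + p) ^+ 2.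
Proof.
move=> Hn; rewrite init_pi /Tm /= /pi (exprNn p) -signr_odd (negbTE Hn) expr0 mul1r exprS.
have hp := hp1; by field.
Qed.

Lemma cyc_Knn n : (0 < n)%N -> ~~ odd n ->
  Kc (cycle_prob p (k:=n.+2)) n.+1 n.+1 = (1 + p) ^+ 2 / (1 + p ^+ n.+1) - 1.
Proof.
move=> Hn Ho; rewrite /Kc Ejoint_diag cyc_marg_last // pin_val //.
rewrite -signr_odd addnn odd_double expr0 mul1r.
have hp := hp1.
have hx : 1 + p ^+ n.+1 != 0 by apply: lt0r_neq0; have := exprn_gt0 n.+1 p0; lra.
by field; rewrite hx hp.
Qed.

Lemma geo3 n : \sum_(j < n.+1) p ^+ (n - j) = (1 - p ^+ n.+1) / (1 - p).
Proof.
have hp0 := p_neq0; have hq := hq1.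
apply: (mulfI hp0); rewrite mulr_sumr.
transitivity (\sum_(j < n.+1) p ^+ (n.+1 - j)).
  apply: eq_bigr => j _; rewrite subSn ?exprS //; have := ltn_ord j; lia.
by rewrite geo2; field.
Qed.

Lemma altsum n : \sum_(j < n.+1) (-1) ^+ j = (if odd n then 0 else 1 : R).
Proof.
elim: n => [|n IH]; first by rewrite big_ord_recr big_ord0 /= add0r expr0.
rewrite big_ord_recr /= IH exprS -signr_odd; case: (odd n) => /=; ring.
Qed.

Lemma Kjn_sum n : ~~ odd n ->
  \sum_(j < n.+1) Kjn n j = (2 * (1 - p ^+ n.+1) / (1 - p) - p ^+ n * (1 - p)) / (1 + p ^+ n.+1).
Proof.
move=> Ho; rewrite /Kjn -mulr_suml !sumrB big_split /= geo1 geo3 -!mulr_suml altsum (negbTE Ho).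
have hq := hq1; have hx : 1 + p ^+ n.+1 != 0 by apply: lt0r_neq0; have := exprn_gt0 n.+1 p0; lra.
by field; rewrite hx hq.
Qed.

Lemma Kjn_ge0 n j : (j < n.+1)%N -> 0 <= Kjn n j.
Proof.
move=> Hj; rewrite /Kjn.
have Hn : n = (j + (n - j))%N by lia.
rewrite [in p ^+ n]Hn exprD.
have ha : 0 < p ^+ j by apply: exprn_gt0.
have hb : 0 < p ^+ (n - j) by apply: exprn_gt0.
have ha1 : p ^+ j <= 1 by apply: exprn_ile1; have h := p0; have h' := p1; lra.
have hb1 : p ^+ (n - j) <= 1 by apply: exprn_ile1; have h := p0; have h' := p1; lra.
have hx : 0 < 1 + p ^+ n.+1 by have := exprn_gt0 n.+1 p0; lra.
apply: divr_ge0; last exact: ltW.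
move: (p ^+ j) (p ^+ (n - j)) ha hb ha1 hb1 => a b ha hb ha1 hb1.
have h := p0; have h' := p1.
have e1 : 0 <= a * (1 - b) by apply: mulr_ge0; lra.
have e2 : 0 <= a * b * p by apply: mulr_ge0; [apply: mulr_ge0|]; lra.
have e3 : 0 <= a * b by apply: mulr_ge0; lra.
rewrite -signr_odd; case: (odd j); rewrite /= ?expr1 ?expr0; nra.
Qed.


Lemma cyc_main n t1 B : (0 < n)%N -> ~~ odd n -> 0 < B ->
  is_max_var (cycle_prob p (k:=n.+2)) t1 B
       ((1 / p + 2 / (1 - p)) * B ^+ 2 * (n.+1)%:R
        + 2 * B ^+ 2 * (p ^+ n.+1 - 1) / (1 - p) ^+ 2
        + B ^+ 2 * (4 + 2 * p - p ^+ 2 - p ^+ 3 - p ^+ n * (2 + p + p ^+ 2))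
          / ((1 - p) * (1 + p ^+ n.+1))).
Proof.
move=> Hn Ho HB.
have hx : 0 < 1 + p ^+ n.+1 by have := exprn_gt0 n.+1 p0; have h := p0; lra.
have hp := hp1; have hq := hq1; have hp0 := p_neq0.
apply: max_var_of.
- exact: ltW.
- exact: cyc_total.
- move=> j Hj; case: (ltnP j n.+1) => Hj'.
    by rewrite cyc_marg // path_marg //; exact: lt0r_neq0 pi_gt0.
  have -> : j = n.+1 by lia.
  rewrite cyc_marg_last // pin_val //; apply: lt0r_neq0; apply: divr_gt0 => //.
  by apply: exprn_gt0; have h := p0; lra.
- move=> i j Hi Hj.
  case: (ltnP i n.+1) => Hi'; case: (ltnP j n.+1) => Hj'.
  + rewrite cyc_K //; apply: divr_ge0; [exact: exprn_ge0 (ltW p0) | exact: ltW p0].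
  + have -> : j = n.+1 by lia.
    by rewrite cyc_Klast //; apply: Kjn_ge0.
  + have -> : i = n.+1 by lia.
    by rewrite Kc_sym cyc_Klast //; apply: Kjn_ge0.
  + have -> : i = n.+1 by lia.
    have -> : j = n.+1 by lia.
    rewrite cyc_Knn // subr_ge0 ler_pdivlMr // mul1r.
    have h1 : p ^+ n.+1 <= p by rewrite exprS; apply: ler_piMr; [exact: ltW p0 | apply: exprn_ile1; have h := p0; have h' := p1; lra].
    have h := p0; nra.
rewrite (block_sum _ (fun i j => Kc (cycle_prob p (k:=n.+2)) i j)) /=.
have E1 : \sum_(i < n.+1) \sum_(j < n.+1) Kc (cycle_prob p (k:=n.+2)) i j =
   \sum_(i < n.+1) \sum_(j < n.+1) p ^+ (i - j + (j - i)) / p.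
  by apply: eq_bigr => i _; apply: eq_bigr => j _; rewrite cyc_K.
have E2 : \sum_(j < n.+1) Kc (cycle_prob p (k:=n.+2)) n.+1 j = \sum_(j < n.+1) Kjn n j.
  by apply: eq_bigr => j _; rewrite Kc_sym cyc_Klast.
have E3 : \sum_(j < n.+1) Kc (cycle_prob p (k:=n.+2)) j n.+1 = \sum_(j < n.+1) Kjn n j.
  by apply: eq_bigr => j _; rewrite cyc_Klast.
rewrite E1 E2 E3 cyc_Knn // Kjn_sum //.
under eq_bigr do rewrite -mulr_suml.
rewrite -mulr_suml Ssum !(exprS p n).
have hx' : 1 + p * p ^+ n != 0 by rewrite -exprS; exact: lt0r_neq0.
move: (p ^+ n) hx' => x hx'.
by field; rewrite hx' hq hp0.
Qed.

End Chain.



Lemma cvg_bound (R : realType) (u : nat -> R) (L C : R) (N : nat) :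
  (forall k, `|u (k + N)%N - L| <= C / k.+1%:R) -> u @ \oo --> L.
Proof.
move=> H; rewrite -(cvg_shiftn N); apply/subr_cvg0.
apply: (@squeeze_cvgr _ _ _ _ (fun k => - (C * harmonic k)) (fun k => C * harmonic k)).
- apply: nearW => k /=; rewrite -ler_norml; exact: H.
- rewrite -oppr0 -(mulr0 C); apply: cvgN; apply: cvgMl_tmp; exact: cvg_harmonic.
- rewrite -(mulr0 C); apply: cvgMl_tmp; exact: cvg_harmonic.
Qed.

Lemma path_lim (R : realType) (p B : R) (t1 : bool) : 0 < p -> p < 1 -> 0 < B ->
  forall M : nat -> R,
     (forall k : nat, (0 < k)%N -> is_max_var (@path_prob R p k) t1 B (M k)) ->
     (fun k : nat => M k / k%:R) @ \oo --> B ^+ 2 * (1 + p) / (p * (1 - p)).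
Proof.
move=> p0 p1 HB M HM.
apply: (cvg_bound (C := 2 * B ^+ 2 / (1 - p) ^+ 2) (N := 1%N)) => k.
rewrite addn1 (max_var_uniq (HM _ (ltn0Sn k)) (path_main p0 p1 t1 (ltn0Sn k) HB)).
have hp0 : p != 0 by apply: lt0r_neq0.
have hq : 1 - p != 0 by apply: lt0r_neq0; lra.
have hk : k.+1%:R != 0 :> R by rewrite pnatr_eq0.
set y := p ^+ k.+1.
have hy0 : 0 <= y by apply: exprn_ge0; lra.
have hy1 : y <= 1 by apply: exprn_ile1; lra.
set c := 2 * B ^+ 2 / (1 - p) ^+ 2.
have hc : 0 <= c by rewrite /c; apply: divr_ge0; [apply: mulr_ge0 => //; apply: sqr_ge0|apply: sqr_ge0].
set r := k.+1%:R^-1.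
have hr : 0 < r by rewrite /r invr_gt0 ltr0n.
have -> : ((1 / p + 2 / (1 - p)) * B ^+ 2 * k.+1%:R + 2 * B ^+ 2 * (y - 1) / (1 - p) ^+ 2) / k.+1%:R
     - B ^+ 2 * (1 + p) / (p * (1 - p)) = - (c * (1 - y)) * r.
  have hk' : (1 + k%:R : R) != 0 by rewrite addrC natr1 pnatr_eq0.
  by rewrite /c /r; field; rewrite hk' hq hp0.
have h1 : 0 <= c * y * r by apply: mulr_ge0; [apply: mulr_ge0|apply: ltW].
have h2 : 0 <= c * r by apply: mulr_ge0 => //; apply: ltW.
have -> : - (c * (1 - y)) * r = c * y * r - c * r by ring.
have h3 : 0 <= c * r * (1 - y) by apply: mulr_ge0 => //; lra.
clearbody y c r; apply/ler_normlP; split; nra.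
Qed.

Lemma cyc_lim (R : realType) (p B : R) (t1 : bool) : 0 < p -> p < 1 -> 0 < B ->
  forall M : nat -> R,
     (forall k : nat, (4 <= k)%N -> ~~ odd k ->
        is_max_var (@cycle_prob R p k) t1 B (M k)) ->
     (fun m : nat => M m.*2 / (m.*2)%:R) @ \oo --> B ^+ 2 * (1 + p) / (p * (1 - p)).
Proof.
move=> p0 p1 HB M HM.
set L := B ^+ 2 * (1 + p) / (p * (1 - p)).
set c := 2 * B ^+ 2 / (1 - p) ^+ 2.
set s := (1 - p)^-1.
apply: (cvg_bound (C := L + c + 6 * B ^+ 2 * s) (N := 2%N)) => k.
set n := (k.*2).+2.
have Hk2 : ((k + 2).*2 = n.+2)%N by rewrite /n; lia.
have hkn : (k.+1 <= n.+2)%N by rewrite /n; lia.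
rewrite Hk2.
have Hn0 : (0 < n)%N by [].
have Hno : ~~ odd n by rewrite /n /= negbK odd_double.
have H4 : (4 <= n.+2)%N by rewrite /n.
have Ho2 : ~~ odd n.+2 by rewrite /= negbK.
rewrite (max_var_uniq (HM _ H4 Ho2) (cyc_main p0 p1 t1 Hn0 Hno HB)).
rewrite !(exprS p n).
have hp0 : p != 0 by apply: lt0r_neq0.
have hq : 1 - p != 0 by apply: lt0r_neq0; lra.
have hx0 : 0 <= p ^+ n by apply: exprn_ge0; lra.
have hx1 : p ^+ n <= 1 by apply: exprn_ile1; lra.
move: (p ^+ n) hx0 hx1 => x hx0 hx1.
have hpx : 1 + p * x != 0 by apply: lt0r_neq0; have := mulr_ge0 (ltW p0) hx0; lra.
have e2 : (n.+2)%:R = (n.+1)%:R + 1 :> R by rewrite natr1.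
have hn1 : (n.+1)%:R + 1 != 0 :> R by rewrite natr1 pnatr_eq0.
set Nn := 4 + 2 * p - p ^+ 2 - p ^+ 3 - x * (2 + p + p ^+ 2).
set q := ((1 - p) * (1 + p * x))^-1.
set r2 := ((n.+2)%:R)^-1 : R.
have -> : ((1 / p + 2 / (1 - p)) * B ^+ 2 * n.+1%:R + 2 * B ^+ 2 * (p * x - 1) / (1 - p) ^+ 2 +
     B ^+ 2 * Nn / ((1 - p) * (1 + p * x))) / (n.+2)%:R - L
    = (- L + c * (p * x - 1) + B ^+ 2 * Nn * q) * r2.
  have hn2 : (1 + n%:R + 1 : R) != 0 by rewrite [1 + n%:R]addrC !natr1 pnatr_eq0.
  by rewrite /r2 /q /L /c e2; field; rewrite hn2 hpx hq hp0.
have hB2 : 0 < B ^+ 2 by apply: exprn_gt0.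
have hpq : 0 < p * (1 - p) by apply: mulr_gt0; lra.
have hL : 0 <= L by rewrite /L; apply: divr_ge0; [apply: mulr_ge0; lra| lra].
have hc : 0 <= c by rewrite /c; apply: divr_ge0; [lra| apply: sqr_ge0].
have hs : 0 < s by rewrite /s invr_gt0; lra.
have hpx0 : 0 <= p * x by apply: mulr_ge0; lra.
have hpx1 : p * x <= 1 by have := ler_pM (ltW p0) hx0 (ltW p1) hx1; lra.
have hq0 : 0 < q by rewrite /q invr_gt0; apply: mulr_gt0; lra.
have hqs : q <= s.
  rewrite /q /s lef_pV2 ?posrE; [|apply: mulr_gt0; lra| lra].
  have hq' : 0 < 1 - p by lra.
  have := mulr_ge0 (ltW hq') hpx0; nra.
have hN0 : 0 <= Nn.
  rewrite /Nn.
  have e1 : 0 <= (1 - x) * (2 + p + p ^+ 2) by apply: mulr_ge0; [lra | have := sqr_ge0 p; lra].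
  have e3 : 0 <= (1 - p) * (2 + 3 * p + p ^+ 2) by apply: mulr_ge0; [lra | have := sqr_ge0 p; lra].
  rewrite !exprS expr0 in e1 e3 *; nra.
have hN6 : Nn <= 6.
  rewrite /Nn.
  have e1 : 0 <= x * (2 + p + p ^+ 2) by apply: mulr_ge0; [lra | have := sqr_ge0 p; lra].
  have e2' : 0 <= p ^+ 2 by apply: sqr_ge0.
  have e3 : 0 <= p ^+ 3 by apply: exprn_ge0; lra.
  lra.
set T := B ^+ 2 * Nn * q.
have hT0 : 0 <= T by rewrite /T; apply: mulr_ge0; [apply: mulr_ge0; lra | lra].
have hT6 : T <= 6 * B ^+ 2 * s.
  rewrite /T.
  have f1 : 0 <= (6 - Nn) * (B ^+ 2 * q) by apply: mulr_ge0; [lra | apply: mulr_ge0; lra].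
  have f2 : 0 <= 6 * B ^+ 2 * (s - q) by apply: mulr_ge0; [lra | lra].
  nra.
have hA0 : c * (p * x - 1) <= 0.
  have hpx2 : 0 <= 1 - p * x by lra.
  have := mulr_ge0 hc hpx2; nra.
have hA1 : - c <= c * (p * x - 1) by have := mulr_ge0 hc hpx0; nra.
set X := - L + c * (p * x - 1) + T.
set C0 := L + c + 6 * B ^+ 2 * s.
have hX1 : X <= C0 by rewrite /X /C0; lra.
have hX2 : - C0 <= X by rewrite /X /C0; lra.
set r1 := (k.+1%:R)^-1 : R.
have hr2 : 0 < r2 by rewrite /r2 invr_gt0 ltr0n.
have hr12 : r2 <= r1 by rewrite /r1 /r2 lef_pV2 ?posrE ?ltr0n // ler_nat.
have g1 : 0 <= (C0 - X) * r2 by apply: mulr_ge0; lra.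
have g2 : 0 <= (C0 + X) * r2 by apply: mulr_ge0; lra.
have g3 : 0 <= C0 * (r1 - r2) by apply: mulr_ge0; lra.
rewrite -/r1; clearbody X C0 r1 r2.
apply/ler_normlP; split; nra.
Qed.

Unset Implicit Arguments.
Theorem theorem2 (R : realType) (p B : R) (t1 : bool) :
  0 < p < 1 -> 0 < B ->
  (* paths of length k >= 1 *)
  (forall k : nat, (0 < k)%N ->
     is_max_var (@path_prob R p k) t1 B
       ((1 / p + 2 / (1 - p)) * B ^+ 2 * k%:R
        + 2 * B ^+ 2 * (p ^+ k - 1) / (1 - p) ^+ 2)) /\
  (* alternating cycles: even length k >= 4 *)
  (forall k : nat, (4 <= k)%N -> ~~ odd k ->
     is_max_var (@cycle_prob R p k) t1 B
       ((1 / p + 2 / (1 - p)) * B ^+ 2 * (k.-1)%:R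
        + 2 * B ^+ 2 * (p ^+ k.-1 - 1) / (1 - p) ^+ 2
        + B ^+ 2 * (4 + 2 * p - p ^+ 2 - p ^+ 3 - p ^+ k.-2 * (2 + p + p ^+ 2))
          / ((1 - p) * (1 + p ^+ k.-1)))) /\
  (* limit for paths *)
  (forall M : nat -> R,
     (forall k : nat, (0 < k)%N -> is_max_var (@path_prob R p k) t1 B (M k)) ->
     (fun k : nat => M k / k%:R) @ \oo --> B ^+ 2 * (1 + p) / (p * (1 - p))) /\
  (* limit for cycles (lengths k = 2m, m -> oo) *)
  (forall M : nat -> R,
     (forall k : nat, (4 <= k)%N -> ~~ odd k ->
        is_max_var (@cycle_prob R p k) t1 B (M k)) ->
     (fun m : nat => M m.*2 / (m.*2)%:R) @ \oo --> B ^+ 2 * (1 + p) / (p * (1 - p))).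
Proof.
move=> /andP[p0 p1] HB.
split; [|split; [|split]].
- move=> k Hk; exact: (path_main p0 p1 t1 Hk HB).
- move=> k Hk Ho.
  have [n En] : exists n, k = n.+2 by exists k.-2; lia.
  subst k.
  have Hn0 : (0 < n)%N by lia.
  have Hno : ~~ odd n by move: Ho; rewrite /= negbK.
  exact: (cyc_main p0 p1 t1 Hn0 Hno HB).
- exact: path_lim.
- exact: cyc_lim.
Qed.
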